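(* Let $q$ be an odd prime and $a\in(\mathbb{Z}/q\mathbb{Z})^\times$. (i) If $q\ne5$, or if $q=5$ and $a\ne 3+5\mathbb{Z}$, then there exists $x\in(\mathbb{Z}/q\mathbb{Z})^\times$ such that $\left(\frac{x+a/x}{q}\right)\ne1$. (ii) If $q\notin\{7,13\}$, then there exists $x\in(\mathbb{Z}/q\mathbb{Z})^\times$ such that $\left(\frac{x^6+a}{q}\right)\ne1$.
   Context: $\left(\frac{\cdot}{q}\right)$ denotes the Legendre symbol modulo $q$ (taking value $0$ on the zero class). *)

(* Defs.v *)
From mathcomp Require Import all_boot all_algebra.
Set Implicit Arguments. Unset Strict Implicit. Unset Printing Implicit Defensive.
Import GRing.Theory.
Local Open Scope ring_scope.

Definition legendre (p : nat) (x : 'F_p) : int :=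
  if x == 0 then 0
  else if [exists y : 'F_p, y ^+ 2 == x] then 1 else -1.

(* Main.v *)
Require Import Defs.
From mathcomp Require Import all_boot all_order all_algebra.
From mathcomp Require Import finfield.
From mathcomp Require Import zify ring lra.
Import Order.TTheory GRing.Theory Num.Theory.
Local Open Scope ring_scope.

Section Fiber.
Variable F : finFieldType.

Lemma fiber_card (k : nat) (c : F) : (0 < k)%N ->
  (#|[pred t : F | t ^+ k == c]| <= k)%N.
Proof.
move=> k0.
have := @max_poly_roots F ('X^k - c%:P) (enum [pred t : F | t ^+ k == c]).
rewrite size_XnsubC // ltnS -cardE; apply; last exact: enum_uniq.
  by rewrite -size_poly_eq0 size_XnsubC.
apply/allP => t; rewrite mem_enum inE /root !hornerE subr_eq0 => ->; done.
Qed.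

Lemma fiber_sum (k : nat) (c : F) (f : F -> int) : (0 < k)%N -> c != 0 ->
  (forall b, 0 <= f b) -> \sum_t f (c * t ^+ k) <= k%:R * \sum_b f b.
Proof.
move=> k0 c0 fge.
rewrite (partition_big (fun t => c * t^+k) predT) //.
rewrite mulr_sumr; apply: ler_sum => b _.
rewrite (eq_bigr (fun=> f b)); last by move=> t /eqP ->.
rewrite sumr_const -[f b *+ _]mulr_natl.
apply: (ler_wpM2r (fge b)).
rewrite ler_nat.

apply: leq_trans (fiber_card k (c^-1 * b) k0); apply: subset_leq_card.
by apply/subsetP => t; rewrite !inE => /eqP <-; rewrite mulKf.
Qed.
End Fiber.

Section Leg.
Variables (q : nat) (hq : prime q) (hodd : odd q).
Local Notation F := ('F_q).
Local Notation chi := (@legendre q).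
Local Notation m := ((q.-1)./2).

Lemma cardF : #|F| = q. Proof. exact: card_Fp. Qed.
Lemma q_gt2 : (2 < q)%N.
Proof. have := prime_gt1 hq; have : q != 2%N by apply: contraTneq hodd => ->. lia. Qed.
Lemma m_gt0 : (0 < m)%N.
Proof. have := q_gt2; case: q => [|[|[|n]]] //. Qed.
Lemma m2 : (m * 2 = q.-1)%N.
Proof.
have o : odd q.-1 = false.
  by move: hodd; rewrite -{1}(prednK (prime_gt0 hq)) /= => /negbTE.
have := odd_double_half q.-1; rewrite o add0n.
by rewrite -muln2.
Qed.

Lemma fermat (x : F) : x != 0 -> x ^+ q.-1 = 1.
Proof.
move=> x0; have h := expf_card x; rewrite cardF in h.
apply: (mulfI x0); by rewrite mulr1 -exprS prednK ?prime_gt0.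
Qed.

Lemma pm1 (x : F) : x != 0 -> (x ^+ m == 1) || (x ^+ m == -1).
Proof. by move=> x0; rewrite -sqrf_eq1 -exprM m2 fermat. Qed.

Lemma one_neq_m1 : (1 : F) != -1.
Proof.
apply/eqP => h.
have /(congr1 (@nat_of_ord _)) : (2%:R : F) = 0 by rewrite mulr2n {1}h addNr.
rewrite val_Fp_nat // modn_small ?q_gt2 //.
Qed.

Lemma sq_half (y : F) : y != 0 -> (y ^+ 2) ^+ m = 1.
Proof. by move=> y0; rewrite -exprM mulnC m2 fermat. Qed.

Lemma sqE (x : F) : x != 0 -> [exists y, y ^+ 2 == x] = (x ^+ m == 1).
Proof.
move=> x0; apply/existsP/idP => [[y /eqP yx]|xm].
  rewrite -yx sq_half //; apply: contra x0; rewrite -yx => /eqP ->.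
  by rewrite expr0n.
pose A := [pred z : F | z ^+ m == 1].
pose B := [pred z : F | (z != 0) && [exists y, y ^+ 2 == z]].
have AB : B \subset A.
  apply/subsetP => z; rewrite !inE => /andP[z0 /existsP[y /eqP yz]].
  rewrite -yz sq_half //; apply: contra z0; rewrite -yz => /eqP ->.
  by rewrite expr0n.
have cA : (#|A| <= m)%N by apply: fiber_card; exact: m_gt0.
have cB : (q.-1 <= 2 * #|B|)%N.
  have -> : q.-1 = #|predC1 (0 : F)| by rewrite cardC1 cardF.
  rewrite -sum1_card (partition_big (fun y : F => y ^+ 2) (mem B)) /=; last first.
    move=> y y0; rewrite inE expf_neq0 //=; apply/existsP; by exists y.
  rewrite mulnC -sum_nat_const; apply: leq_sum => b _.
  rewrite sum1_card.
  have h := @fiber_card _ 2 b isT.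
  apply: leq_trans h; apply: subset_leq_card.
  by apply/subsetP => y; rewrite !inE => /andP[].
have : #|B| = #|A| by apply/eqP; rewrite eqn_leq subset_leq_card //=; have := m2; lia.
move=> /subset_cardP /(_ AB) eqAB.
have : x \in A by rewrite inE.
rewrite -eqAB inE => /andP[_ /existsP[y hy]]; by exists y.
Qed.


Lemma legE (x : F) : chi x = if x == 0 then 0 else if x ^+ m == 1 then 1 else -1.
Proof. rewrite /legendre; case: eqP => // /eqP x0; by rewrite sqE. Qed.

Lemma m1_neq1 : ((-1 : F) == 1) = false.
Proof. by apply/negbTE; rewrite eq_sym one_neq_m1. Qed.

Lemma legM (x y : F) : chi (x * y) = chi x * chi y.
Proof.
rewrite !legE mulf_eq0; have [->|x0] := eqVneq x 0; first by rewrite /= mul0r.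
have [->|y0] /= := eqVneq y 0; first by rewrite ?eqxx ?orbT mulr0.
rewrite exprMn.
by case/orP: (pm1 x x0) => /eqP ->; case/orP: (pm1 y y0) => /eqP ->;
  rewrite ?mul1r ?mulr1 ?mulrNN ?mulr1 ?eqxx ?m1_neq1.
Qed.

Lemma leg0 : chi 0 = 0. Proof. by rewrite legE eqxx. Qed.
Lemma leg1 : chi 1 = 1. Proof. by rewrite legE oner_eq0 expr1n eqxx. Qed.

Lemma leg_sq (x : F) : x != 0 -> chi x * chi x = 1.
Proof.
move=> x0; rewrite -legM legE mulf_eq0 (negbTE x0) /=.
by rewrite -expr2 sq_half // eqxx.
Qed.

Lemma leg_sq' (x : F) : x != 0 -> chi (x ^+ 2) = 1.
Proof. by move=> x0; rewrite expr2 legM leg_sq. Qed.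

Lemma leg_cases (x : F) : [\/ chi x = 0, chi x = 1 | chi x = -1].
Proof. rewrite legE; case: ifP => _; first by constructor 1.
case: ifP => _; [by constructor 2 | by constructor 3]. Qed.

Lemma leg_sum : \sum_(x : F) chi x = 0.
Proof.
have [n /andP[n0 nm]] : exists n : F, (n != 0) && (n ^+ m != 1).
  apply/existsP; apply: contraT; rewrite negb_exists => /forallP H.
  have : (#|predC1 (0%R : F)| <= m)%N.
    apply: leq_trans (@fiber_card _ m 1 m_gt0); apply: subset_leq_card.
    apply/subsetP => y; rewrite !inE => y0.
    by have := H y; rewrite y0 /= negbK.
  rewrite cardC1 cardF; have := m2; have := q_gt2; lia.
have chin : chi n = -1 by rewrite legE (negbTE n0) (negbTE nm).
set S := \sum_x chi x.
have : S = - S.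
  rewrite {1}/S (reindex_inj (mulfI n0)) /=.
  under eq_bigr => x _ do rewrite legM chin mulN1r.
  by rewrite sumrN.
move=> h; have : S *+ 2 = 0 by rewrite mulr2n {1}h addNr.
by move/eqP; rewrite mulrn_eq0 /= => /eqP.
Qed.

Lemma corr0 (c : F) : c != 0 -> \sum_(b : F) chi b * chi (c + b) = -1.
Proof.
move=> c0.
have key : forall b : F, chi b * chi (c + b) = chi (1 + c / b) - (b == 0)%:R.
  move=> b; have [->|b0] := eqVneq b 0.
    by rewrite leg0 mul0r invr0 mulr0 addr0 leg1 /= mulr1n subrr.
  rewrite /= subr0 -legM.
  have -> : b * (c + b) = (b * b) * (1 + c / b) by field.
  by rewrite legM [chi (b * b)]legM leg_sq // mul1r.
under eq_bigr => b _ do rewrite key.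
rewrite sumrB.
have inj : injective (fun b : F => 1 + c / b).
  by move=> x y /addrI /(mulfI c0) /invr_inj.
have -> : \sum_(b : F) chi (1 + c / b) = \sum_(b : F) chi b.
  by rewrite [RHS](reindex_inj inj).
rewrite leg_sum.
rewrite (bigD1 0) //= big1 => [|b /negbTE -> //].
by rewrite addr0 sub0r.
Qed.

Lemma corr (u v : F) :
  \sum_(b : F) chi (u + b) * chi (v + b) = if u == v then (q.-1)%:R else -1.
Proof.
have [<-|uv] := eqVneq u v.
  rewrite (reindex_inj (addrI (- u))) /=.
  under eq_bigr => b _ do rewrite addNKr.
  rewrite (bigD1 0) //= leg0 mul0r add0r.
  rewrite (eq_bigr (fun _ => 1)); last by move=> b b0; rewrite leg_sq.
  by rewrite sumr_const cardC1 cardF.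
rewrite (reindex_inj (addrI (- u))) /=.
under eq_bigr => b _ do rewrite addNKr addrA.
by rewrite corr0 // subr_eq0 eq_sym.
Qed.


Lemma sum_sq_gen (w : F -> int) (g : F -> F) :
  \sum_(b : F) (\sum_(x : F) w x * chi (g x + b)) ^+ 2 =
  \sum_(x : F) \sum_(y : F) w x * w y * (if g x == g y then (q.-1)%:R else -1).
Proof.
under eq_bigr => b _ do rewrite expr2 big_distrlr /=.
rewrite exchange_big; apply: eq_bigr => x _.
rewrite exchange_big; apply: eq_bigr => y _.
rewrite -corr mulr_sumr; apply: eq_bigr => b _; ring.
Qed.

Lemma sum_bool_card (P : pred F) : \sum_(y : F) ((P y)%:R : int) = (#|P|%:R : int).
Proof.
rewrite -sum1_card natr_sum [RHS]big_mkcond /=; apply: eq_bigr => y _; rewrite /in_mem /=; by case: (P y).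
Qed.

Lemma sum_sq_bound (w : F -> int) (g : F -> F) (k : nat) :
  (forall x y, w x * w y <= 1) ->
  (forall x, (#|[pred y | g y == g x]| <= k)%N) ->
  \sum_(b : F) (\sum_(x : F) w x * chi (g x + b)) ^+ 2 <= (q * (q * k))%:R.
Proof.
move=> w1 gk; rewrite sum_sq_gen.
have e : forall x y, w x * w y * (if g x == g y then (q.-1)%:R else -1)
    = q%:R * ((g x == g y)%:R * (w x * w y)) - w x * w y.
  move=> x y; case: eqP => _ /=.
    rewrite -subn1 natrB ?prime_gt0 //; ring.
  ring.
rewrite (eq_bigr (fun x => \sum_y (q%:R * ((g x == g y)%:R * (w x * w y)) - w x * w y)));
  last by move=> x _; apply: eq_bigr => y _; exact: e.
under eq_bigr => x _ do rewrite sumrB.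
rewrite sumrB -big_distrlr /=.
have h2 : 0 <= (\sum_x w x) * (\sum_x w x) by rewrite -expr2 sqr_ge0.
have h1 : \sum_x \sum_y q%:R * ((g x == g y)%:R * (w x * w y)) <= (q * (q * k))%:R.
  under eq_bigr => x _ do rewrite -mulr_sumr.
  rewrite -mulr_sumr natrM; apply: ler_wpM2l; first by rewrite ler0n.
  rewrite (_ : (q * k)%:R = \sum_(x : F) (k%:R : int)); last by rewrite sumr_const cardF natrM mulr_natl.
  apply: ler_sum => x _.
  apply: le_trans (_ : \sum_y ((g y == g x)%:R : int) <= _).
    apply: ler_sum => y _; rewrite eq_sym; case: (g y == g x); last by rewrite mul0r.
    by rewrite mul1r.
  by rewrite sum_bool_card ler_nat; exact: (gk x).
apply: le_trans _ h1; by rewrite lerBlDr lerDl.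
Qed.


Lemma part1_bound (a : F) : a != 0 ->
  (forall x : F, x != 0 -> chi (x + a / x) = 1) -> (q <= 6)%N.
Proof.
move=> a0 H.
pose phi (b : F) := \sum_(x : F) chi x * chi (x ^+ 2 + b).
have phia : phi a = (q.-1)%:R.
  rewrite /phi (bigD1 0) //= leg0 mul0r add0r.
  rewrite (eq_bigr (fun _ => 1)); last first.
    move=> x x0.
    have -> : x ^+ 2 + a = x * (x + a / x) by field.
    by rewrite legM mulrA leg_sq // mul1r H.
  by rewrite sumr_const cardC1 cardF.
have phit : forall t : F, t != 0 -> phi (a * t ^+ 2) = chi t * phi a.
  move=> t t0; rewrite /phi (reindex_inj (mulfI t0)) mulr_sumr; apply: eq_bigr => x _.
  have -> : (t * x) ^+ 2 + a * t ^+ 2 = t ^+ 2 * (x ^+ 2 + a) by ring.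
  by rewrite !legM leg_sq // mul1r mulrA.
have h1 : \sum_(t : F) phi (a * t ^+ 2) ^+ 2 <= 2%:R * \sum_(b : F) phi b ^+ 2.
  by apply: (@fiber_sum _ 2 a (fun b => phi b ^+ 2)) => // b; rewrite sqr_ge0.
have h2 : \sum_(b : F) phi b ^+ 2 <= (q * (q * 2))%:R.
  apply: (@sum_sq_bound chi (fun x => x ^+ 2) 2).
    by move=> x y; case: (leg_cases x) => ->; case: (leg_cases y) => ->.
  move=> x; exact: (@fiber_card _ 2 (x ^+ 2) isT).
have h3 : ((q.-1) * (q.-1) ^ 2)%:R <= \sum_(t : F) phi (a * t ^+ 2) ^+ 2.
  rewrite (bigD1 0) //= -[X in X <= _]add0r; apply: lerD; first exact: sqr_ge0.
  rewrite (eq_bigr (fun _ => ((q.-1) ^ 2)%:R)); last first.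
    move=> t t0; rewrite phit // exprMn phia expr2 leg_sq // mul1r natrX.
    done.
  by rewrite sumr_const cardC1 cardF mulnC natrM mulr_natr.
have := le_trans h3 (le_trans h1 (ler_wpM2l (ler0n _ 2) h2)).
rewrite -natrM ler_nat => h.
have q1 := prime_gt1 hq.
nia.
Qed.

Lemma part2_bound (a : F) : a != 0 ->
  (forall x : F, x != 0 -> chi (x ^+ 6 + a) = 1) -> (q <= 40)%N.
Proof.
move=> a0 H.
pose psi (b : F) := \sum_(x : F) 1 * chi (x ^+ 6 + b).
have psia : (q.-1)%:R - 1 <= psi a.
  rewrite /psi (bigD1 0) //=.
  rewrite (eq_bigr (fun _ => 1)); last by move=> x x0; rewrite H // mul1r.
  rewrite sumr_const cardC1 cardF addrC lerD2l mul1r.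
  by case: (leg_cases (0 ^+ 6 + a)) => ->.
have psit : forall t : F, t != 0 -> psi (a * t ^+ 6) = psi a.
  move=> t t0; rewrite /psi (reindex_inj (mulfI t0)); apply: eq_bigr => x _.
  have -> : (t * x) ^+ 6 + a * t ^+ 6 = (t ^+ 3) ^+ 2 * (x ^+ 6 + a) by ring.
  by rewrite legM leg_sq' ?expf_neq0 // mul1r.
have h1 : \sum_(t : F) psi (a * t ^+ 6) ^+ 2 <= 6%:R * \sum_(b : F) psi b ^+ 2.
  by apply: (@fiber_sum _ 6 a (fun b => psi b ^+ 2)) => // b; rewrite sqr_ge0.
have h2 : \sum_(b : F) psi b ^+ 2 <= (q * (q * 6))%:R.
  apply: (@sum_sq_bound (fun _ => 1) (fun x => x ^+ 6) 6).
    by move=> x y; rewrite mul1r.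
  move=> x; exact: (@fiber_card _ 6 (x ^+ 6) isT).
have q1 := prime_gt1 hq.
have c0 : 0 <= (q.-1)%:R - 1 :> int.
  rewrite subr_ge0 ler1n; have := q_gt2; lia.
have h3 : (q.-1)%:R * ((q.-1)%:R - 1) ^+ 2 <= \sum_(t : F) psi (a * t ^+ 6) ^+ 2.
  rewrite (bigD1 0) //= -[X in X <= _]add0r; apply: lerD; first exact: sqr_ge0.
  rewrite (eq_bigr (fun _ => psi a ^+ 2)); last by move=> t t0; rewrite psit.
  rewrite sumr_const cardC1 cardF mulr_natl; apply: ler_wMn2r.
  rewrite !expr2; apply: ler_pM => //.
have := le_trans h3 (le_trans h1 (ler_wpM2l (ler0n _ 6) h2)).
move=> h.
nia.
Qed.


Lemma leg1E (v : F) : chi v = 1 -> v ^+ m == 1.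
Proof. by rewrite legE; case: ifP => _ //; case: ifP. Qed.

End Leg.

Lemma check_all (p : nat) (hp : prime p) (P : 'F_p -> bool) :
  all (fun n => P n%:R) (iota 0 p) -> forall a, P a.
Proof.
move=> /allP h a.
have lt : (a < p)%N by rewrite -[X in (_ < X)%N](Fp_cast hp) ltn_ord.
have -> : a = (nat_of_ord a)%:R.
  by apply: val_inj; rewrite /= val_Fp_nat // modn_small.
by apply: h; rewrite mem_iota add0n lt.
Qed.

Lemma fin1 (q : nat) : prime q -> odd q -> (q <= 6)%N ->
  forall a : 'F_q, (a == 0) || ((q == 5%N) && (a == 3%:R)) ||
    has (fun k : nat => ((k%:R : 'F_q) != 0) &&
      (((k%:R : 'F_q) + a / k%:R) ^+ (q.-1)./2 != 1)) (iota 1 q.-1).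
Proof.
move=> hq ho q6.
have allq : all (fun n => (prime n && odd n && (n <= 6)%N) ==> (n \in [:: 3; 5]))
  (iota 0 41) by vm_compute.
have : q \in [:: 3; 5].
  move/allP: allq => /(_ q); rewrite hq ho q6 mem_iota /=; apply.
  have : (q <= 6)%N := q6. lia.
rewrite !inE => /orP[/eqP E|/eqP E]; subst q;
  (apply: check_all; [done | by vm_compute]).
Qed.

Lemma fin2 (q : nat) : prime q -> odd q -> (q <= 40)%N -> ~~ (q \in [:: 7; 13])%N ->
  forall a : 'F_q, (a == 0) ||
    has (fun k : nat => ((k%:R : 'F_q) != 0) &&
      (((k%:R : 'F_q) ^+ 6 + a) ^+ (q.-1)./2 != 1)) (iota 1 q.-1).
Proof.
move=> hq ho q40 h713.
have allq : all (fun n => (prime n && odd n && (n <= 40)%N && ~~ (n \in [:: 7; 13])) ==>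
   (n \in [:: 3; 5; 11; 17; 19; 23; 29; 31; 37])) (iota 0 41) by vm_compute.
have : q \in [:: 3; 5; 11; 17; 19; 23; 29; 31; 37].
  move/allP: allq => /(_ q); rewrite hq ho q40 h713 mem_iota /=; apply.
  have : (q <= 40)%N := q40. lia.
rewrite !inE.
repeat (case/orP; [move/eqP=> E; subst q; apply: check_all; [done | by vm_compute] | ]).
move/eqP=> E; subst q; apply: check_all; [done | by vm_compute].
Qed.


Theorem lemma2 (q : nat) (hq : prime q) (hodd : odd q)
    (a : 'F_q) (ha : a \is a GRing.unit) :
  ((q != 5)%N \/ (q = 5%N /\ a != 3%:R) ->
     exists2 x : 'F_q, x \is a GRing.unit & legendre (x + a / x) != 1)
  /\
  (~~ (q \in [:: 7; 13])%N ->
     exists2 x : 'F_q, x \is a GRing.unit & legendre (x ^+ 6 + a) != 1).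
Proof.
have a0 : a != 0 by rewrite -unitfE.
split.
- move=> hyp.
  case: (boolP [exists x : 'F_q, (x != 0) && (legendre (x + a / x) != 1)]).
    by case/existsP => x /andP[x0 hx]; exists x; rewrite ?unitfE.
  rewrite negb_exists => /forallP H.
  have H' : forall x : 'F_q, x != 0 -> legendre (x + a / x) = 1.
    by move=> x x0; have := H x; rewrite x0 /= negbK => /eqP.
  have q6 := @part1_bound q hq hodd a a0 H'.
  have := @fin1 q hq hodd q6 a; rewrite (negbTE a0) /=.
  case/orP => [/andP[/eqP q5 /eqP a3]|/hasP[k _ /andP[k0 hk]]].
    case: hyp => [h|[_ h]]; [by rewrite q5 in h | by rewrite a3 eqxx in h].
  by have := @leg1E q hq hodd _ (H' _ k0); rewrite (negbTE hk).
- move=> hyp.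
  case: (boolP [exists x : 'F_q, (x != 0) && (legendre (x ^+ 6 + a) != 1)]).
    by case/existsP => x /andP[x0 hx]; exists x; rewrite ?unitfE.
  rewrite negb_exists => /forallP H.
  have H' : forall x : 'F_q, x != 0 -> legendre (x ^+ 6 + a) = 1.
    by move=> x x0; have := H x; rewrite x0 /= negbK => /eqP.
  have q40 := @part2_bound q hq hodd a a0 H'.
  have := @fin2 q hq hodd q40 hyp a; rewrite (negbTE a0) /=.
  case/hasP => k _ /andP[k0 hk].
  by have := @leg1E q hq hodd _ (H' _ k0); rewrite (negbTE hk).
Qed.
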